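(* Let $T$ be a complete theory and $\phi(x,y)$ a formula. The following are equivalent: (1) $\phi(x,y)$ has the strict order property. (2) There exist a model $M$ of $T$, a tuple $b\in M$ and $\sigma\in\mathrm{Aut}(M)$ such that, with $U=\phi(M,b)$, $U\subsetneq\sigma(U)$. (3) There exist a model $M$ of $T$, a tuple $b\in M$ and $\sigma\in\mathrm{Aut}(M)$ such that, with $U=\phi(M,b)$, $\xi_{\sigma,U}(M)$ consists of $\Theta$ together with possibly $\bar0$ and $\bar1$ (i.e. $\Theta\subseteq\xi_{\sigma,U}(M)\subseteq\Theta\cup\{\bar0,\bar1\}$). (4) The same as (3) with the additional requirement $\sigma\in W_b$.
   Context: $\phi(x,y)$ has the strict order property if there are a model $M$ and tuples $(b_i)_{i<\omega}$ with $\phi(M,b_i)\subsetneq\phi(M,b_{i+1})$ for all $i$. Subsets of $\mathbb{Z}$ are identified with binary $\mathbb{Z}$-sequences. For $\sigma\in\mathrm{Aut}(M)$ and $U\subseteq M$, $\xi_{\sigma,U}(a)=\{n\in\mathbb{Z}:\sigma^n(a)\in U\}$ and $\xi_{\sigma,U}(M)$ is its image. $\bar1\bar0=\{i\in\mathbb{Z}:i\le0\}$, $\Theta$ is its orbit under the shift $I\mapsto I+1$ (i.e. all sets $\{i:i\le k\}$, $k\in\mathbb{Z}$), $\bar0=\emptyset$ and $\bar1=\mathbb{Z}$. $W_b$ is the set of automorphisms $\sigma$ of $M$ such that $(\sigma^n(b))_{n\in\mathbb{Z}}$ is an indiscernible sequence. *)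

(* Defs.v *)
From HB Require Import structures.
From mathcomp Require Import all_boot all_order all_algebra.

Set Implicit Arguments.
Unset Strict Implicit.
Unset Printing Implicit Defensive.
Import Order.TTheory GRing.Theory Num.Theory.

Record language := Language {
  funs : Type; fun_ar : funs -> nat;   (* constants = 0-ary function symbols *)
  rels : Type; rel_ar : rels -> nat }.

Section Syntax.
Variable L : language.

Inductive term (n : nat) : Type :=
| Tvar : 'I_n -> term n
| Tapp : forall f : funs L, ('I_(fun_ar f) -> term n) -> term n.

(* formula n : formulas whose free variables are among 'I_n;
   the quantifiers bind the new variable ord0 of 'I_n.+1 *)
Inductive formula : nat -> Type :=
| Ftrue  : forall n, formula n
| Ffalse : forall n, formula n
| Feq    : forall n, term n -> term n -> formula n
| Frel   : forall n (r : rels L), ('I_(rel_ar r) -> term n) -> formula n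
| Fneg   : forall n, formula n -> formula n
| Fand   : forall n, formula n -> formula n -> formula n
| For    : forall n, formula n -> formula n -> formula n
| Fimp   : forall n, formula n -> formula n -> formula n
| Fex    : forall n, formula n.+1 -> formula n
| Fall   : forall n, formula n.+1 -> formula n.

Definition sentence := formula 0.
Definition theory := sentence -> Prop.

End Syntax.

Record structure (L : language) := Structure {
  carrier :> Type;
  inhabitant : carrier;
  interp_fun : forall f : funs L, ('I_(fun_ar f) -> carrier) -> carrier;
  interp_rel : forall r : rels L, ('I_(rel_ar r) -> carrier) -> Prop }.

Section Semantics.
Variables (L : language) (M : structure L).

Fixpoint teval n (v : 'I_n -> M) (t : term L n) : M :=
  match t with
  | Tvar i => v i
  | Tapp f ts => @interp_fun L M f (fun i => teval v (ts i))
  end.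

Definition scons n (x : M) (v : 'I_n -> M) : 'I_n.+1 -> M :=
  fun i => match unlift ord0 i with Some j => v j | None => x end.

Fixpoint sat n (v : 'I_n -> M) (phi : formula L n) {struct phi} : Prop :=
  match phi in formula _ n return ('I_n -> M) -> Prop with
  | Ftrue _ => fun _ => True
  | Ffalse _ => fun _ => False
  | Feq _ t1 t2 => fun v => teval v t1 = teval v t2
  | Frel _ r ts => fun v => @interp_rel L M r (fun i => teval v (ts i))
  | Fneg _ p => fun v => ~ sat v p
  | Fand _ p q => fun v => sat v p /\ sat v q
  | For _ p q => fun v => sat v p \/ sat v q
  | Fimp _ p q => fun v => sat v p -> sat v q
  | Fex _ p => fun v => exists x : M, sat (scons x v) p
  | Fall _ p => fun v => forall x : M, sat (scons x v) p
  end v.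

Definition no_vars : 'I_0 -> M := fun i => match (notF (ltn_ord i)) with end.
Definition satS (s : sentence L) : Prop := sat no_vars s.

End Semantics.

Definition is_model (L : language) (T : theory L) (M : structure L) : Prop :=
  forall s, T s -> satS M s.

Definition complete_theory (L : language) (T : theory L) : Prop :=
  (exists M : structure L, is_model T M) /\
  forall s : sentence L,
    (forall M : structure L, is_model T M -> satS M s) \/
    (forall M : structure L, is_model T M -> satS M (Fneg s)).

(* the variables 'I_(n+m) of phi: the first n are x, the last m are y *)
Definition env2 (L : language) (M : structure L) n m
  (a : 'I_n -> M) (b : 'I_m -> M) : 'I_(n + m) -> M :=
  fun k => match split k with inl i => a i | inr j => b j end.

Definition defset (L : language) (M : structure L) n m
  (phi : formula L (n + m)) (b : 'I_m -> M) : ('I_n -> M) -> Prop :=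
  fun a => sat (env2 a b) phi.

Definition strict_subset (A : Type) (U V : A -> Prop) : Prop :=
  (forall a, U a -> V a) /\ (exists a, V a /\ ~ U a).

(* strict order property (for a complete theory T: in some model of T) *)
Definition SOP (L : language) (T : theory L) n m (phi : formula L (n + m)) : Prop :=
  exists (M : structure L) (b : nat -> 'I_m -> M),
    is_model T M /\
    forall i : nat, strict_subset (defset phi (b i)) (defset phi (b i.+1)).

Record automorphism (L : language) (M : structure L) := Automorphism {
  aut_fun :> M -> M;
  aut_inv : M -> M;
  aut_funK : cancel aut_fun aut_inv;
  aut_invK : cancel aut_inv aut_fun;
  aut_fun_hom : forall (f : funs L) (args : 'I_(fun_ar f) -> M),
      aut_fun (@interp_fun L M f args) = @interp_fun L M f (fun i => aut_fun (args i));
  aut_rel_hom : forall (r : rels L) (args : 'I_(rel_ar r) -> M),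
      @interp_rel L M r args <-> @interp_rel L M r (fun i => aut_fun (args i)) }.

Definition aut_pow (L : language) (M : structure L) (s : automorphism M)
  (k : int) : M -> M :=
  match k with
  | Posz p => iter p (aut_fun s)
  | Negz p => iter p.+1 (aut_inv s)
  end.

Definition tact (L : language) (M : structure L) n (f : M -> M)
  (a : 'I_n -> M) : 'I_n -> M := fun i => f (a i).

Definition aut_image (L : language) (M : structure L) n (s : automorphism M)
  (U : ('I_n -> M) -> Prop) : ('I_n -> M) -> Prop :=
  fun c => exists a, U a /\ forall i, c i = s (a i).

Definition xi (L : language) (M : structure L) n (s : automorphism M)
  (U : ('I_n -> M) -> Prop) (a : 'I_n -> M) : int -> Prop :=
  fun k => U (tact (aut_pow s k) a).

(* I belongs to the image xi_{sigma,U}(M) (sets of integers up to extensionality) *)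
Definition in_xi_image (L : language) (M : structure L) n (s : automorphism M)
  (U : ('I_n -> M) -> Prop) (I : int -> Prop) : Prop :=
  exists a : 'I_n -> M, forall k, I k <-> xi s U a k.

(* Theta = orbit of {i | i <= 0} under the shift, i.e. all {i | i <= k} *)
Definition in_Theta (I : int -> Prop) : Prop :=
  exists k : int, forall i, I i <-> (i <= k)%R.
Definition is_bar0 (I : int -> Prop) : Prop := forall i, ~ I i.
Definition is_bar1 (I : int -> Prop) : Prop := forall i, I i.

Definition xi_Theta_shape (L : language) (M : structure L) n
  (s : automorphism M) (U : ('I_n -> M) -> Prop) : Prop :=
  (forall I, in_Theta I -> in_xi_image s U I) /\
  (forall I, in_xi_image s U I -> in_Theta I \/ is_bar0 I \/ is_bar1 I).

(* (sigma^k(b))_{k in Z} is an (order-)indiscernible sequence (over the empty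
   set): for every N, every formula psi(z_1,...,z_N) in N m-tuples of variables
   (the map g says which coordinate of which tuple each variable of psi is),
   and every i_1 < ... < i_N, j_1 < ... < j_N in Z,
   M |= psi(sigma^{i_1} b, ...) <-> M |= psi(sigma^{j_1} b, ...). *)
Definition in_W (L : language) (M : structure L) m (b : 'I_m -> M)
  (s : automorphism M) : Prop :=
  forall (N p : nat) (psi : formula L p) (g : 'I_p -> 'I_N * 'I_m)
         (i j : 'I_N -> int),
    (forall u v : 'I_N, (u < v)%N -> (i u < i v)%R) ->
    (forall u v : 'I_N, (u < v)%N -> (j u < j v)%R) ->
    (sat (fun x => aut_pow s (i (g x).1) (b (g x).2)) psi <->
     sat (fun x => aut_pow s (j (g x).1) (b (g x).2)) psi).

(* Main.v *)
Require Import Defs.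
From mathcomp Require Import all_boot all_order all_algebra.
From mathcomp Require Import zify.
From mathcomp Require Import boolp classical_sets filter.
From Stdlib Require Import ClassicalEpsilon FunctionalExtensionality PropExtensionality Classical ProofIrrelevance.
Set Implicit Arguments.
Unset Strict Implicit.
Unset Printing Implicit Defensive.
Import Order.TTheory GRing.Theory Num.Theory.

Record isUF (I : Type) (U : (I -> Prop) -> Prop) := IsUF {
  uT : U (fun _ => True);
  uI : forall A B, U A -> U B -> U (fun x => A x /\ B x);
  uS : forall A B : I -> Prop, (forall x, A x -> B x) -> U A -> U B;
  u0 : ~ U (fun _ => False);
  uC : forall A, U A \/ U (fun x => ~ A x) }.

Lemma ultra_exists (I : Type) (le : I -> I -> Prop) (i0 : I)
  (lerefl : forall a, le a a)
  (letrans : forall a b c, le a b -> le b c -> le a c)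
  (ledir : forall a b, exists c, le a c /\ le b c) :
  exists U, isUF U /\ forall a, U (le a).
Proof.
pose F : set_system I := fun A => exists a, forall x, le a x -> A x.
have FF : ProperFilter F.
  split.
    by case=> a /(_ a (lerefl a)).
  split.
  - by exists i0.
  - move=> A B [a Ha] [b Hb]; have [c [ac bc]] := ledir a b.
    by exists c => x cx; split; [apply: Ha; apply: letrans cx|apply: Hb; apply: letrans cx].
  - by move=> P Q PQ [a Ha]; exists a => x /Ha /PQ.
have [G [GU FG]] := ultraFilterLemma FF.
exists G; split; last by move=> a; apply: FG; exists a.
split.
- exact: (@filterT _ G).
- move=> A B GA GB; exact: (@filterI _ G _ A B GA GB).
- move=> A B AB GA; exact: (@filterS _ G _ A B AB GA).
- exact: (@filter_not_empty _ G _).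
- move=> A; exact: (in_ultra_setVsetC A GU).
Qed.

Definition incr N (s : 'I_N -> nat) := forall x y : 'I_N, (x < y)%N -> (s x < s y)%N.
Definition infin (A : nat -> Prop) := forall n, exists x, (n <= x)%N /\ A x.
Definition homog N (c : ('I_N -> nat) -> Prop) (A : nat -> Prop) :=
  forall s t, incr s -> incr t -> (forall x, A (s x)) -> (forall x, A (t x)) -> (c s <-> c t).

Definition consT N (x : nat) (s : 'I_N -> nat) : 'I_N.+1 -> nat :=
  fun k => match unlift ord0 k with Some j => s j | None => x end.
Definition tailT N (t : 'I_N.+1 -> nat) : 'I_N -> nat := fun j => t (lift ord0 j).

Lemma consT_tail N (t : 'I_N.+1 -> nat) : consT (t ord0) (tailT t) = t.
Proof.
apply: functional_extensionality => k; rewrite /consT /tailT.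
by case: unliftP => [j ->|->].
Qed.

Lemma tail_incr N (t : 'I_N.+1 -> nat) : incr t -> incr (tailT t).
Proof. by move=> It x y xy; apply: It; rewrite /= /bump /= !add1n ltnS. Qed.

Lemma incr_head N (t : 'I_N.+1 -> nat) : incr t -> forall j, (t ord0 < tailT t j)%N.
Proof. by move=> It j; apply: It; rewrite /= /bump /=. Qed.

Lemma homog_sub N c (A B : nat -> Prop) : (forall x, B x -> A x) -> @homog N c A -> homog c B.
Proof. by move=> BA hA s t Is It Bs Bt; apply: hA => // x; apply: BA. Qed.

Lemma incr0 (s t : 'I_0 -> nat) : s = t.
Proof. by apply: functional_extensionality => -[]. Qed.

Lemma incrS (e : nat -> nat) : (forall k, e k < e k.+1)%N -> forall i j, (i < j)%N -> (e i < e j)%N.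
Proof.
move=> He i j; elim: j => // j IH; rewrite ltnS leq_eqVlt => /orP [/eqP -> //|/IH h].
exact: ltn_trans h (He j).
Qed.

Lemma incr_inj (e : nat -> nat) : (forall i j, (i < j)%N -> (e i < e j)%N) ->
  forall i j, (e i < e j)%N -> (i < j)%N.
Proof.
move=> He i j h; rewrite ltnNge; apply/negP => ji.
move: ji; rewrite leq_eqVlt => /orP [/eqP E|/He]; first by move: h; rewrite E ltnn.
by move=> h2; have := ltn_trans h h2; rewrite ltnn.
Qed.

Lemma ramsey N : forall (c : ('I_N -> nat) -> Prop) (A : nat -> Prop), infin A ->
  exists B, (forall x, B x -> A x) /\ infin B /\ homog c B.
Proof.
elim: N => [|N IH] c A IA.
  exists A; split=> //; split=> // s t _ _ _ _; by rewrite (incr0 s t).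
pose st := {S : nat -> Prop | infin S}.
have step : forall S : st, exists p : nat * st,
   proj1_sig S p.1 /\ (forall y, proj1_sig p.2 y -> proj1_sig S y /\ (p.1 < y)%N) /\
   homog (fun s => c (consT p.1 s)) (proj1_sig p.2).
  move=> [S IS] /=; have [x [_ Sx]] := IS 0.
  have IS' : infin (fun y => S y /\ (x < y)%N).
    move=> n; have [y [ny Sy]] := IS (maxn n x.+1); exists y; split; last split => //.
      by apply: leq_trans ny; apply: leq_maxl.
    by apply: leq_trans ny; apply: leq_maxr.
  have [B [BS [IB HB]]] := IH (fun s => c (consT x s)) _ IS'.
  by exists (x, exist _ B IB) => /=; split.
pose F := fun S : st => proj1_sig (constructive_indefinite_description _ (step S)).
have FS : forall S, let p := F S in proj1_sig S p.1 /\
   (forall y, proj1_sig p.2 y -> proj1_sig S y /\ (p.1 < y)%N) /\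
   homog (fun s => c (consT p.1 s)) (proj1_sig p.2).
  by move=> S; exact: (proj2_sig (constructive_indefinite_description _ (step S))).
pose S0 : st := exist _ A IA.
pose S := fun k => iter k (fun S => (F S).2) S0.
pose x := fun k => (F (S k)).1.
have Sdec : forall k j, (k <= j)%N -> forall y, proj1_sig (S j) y -> proj1_sig (S k) y.
  move=> k j; elim: j => [|j IHj]; first by rewrite leqn0 => /eqP ->.
  rewrite leq_eqVlt => /orP [/eqP -> //|]; rewrite ltnS => kj y Sy.
  apply: IHj => //; have [_ [h _]] := FS (S j); exact: (h y Sy).1.
have xS : forall k, proj1_sig (S k) (x k) by move=> k; have [h _] := FS (S k).
have xinc1 : forall k, (x k < x k.+1)%N.
  move=> k; have [_ [h _]] := FS (S k); exact: (h _ (xS k.+1)).2.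
have xinc := incrS xinc1.
have xlater : forall k j, (k < j)%N -> proj1_sig (S k.+1) (x j).
  by move=> k j kj; apply: (Sdec _ j) => //; exact: xS.
have xA : forall k, A (x k) by move=> k; exact: (Sdec 0 k (leq0n k) _ (xS k)).
pose col := fun k => forall s, incr s -> (forall y, proj1_sig (S k.+1) (s y)) -> c (consT (x k) s).
have colP : forall k s, incr s -> (forall y, proj1_sig (S k.+1) (s y)) -> (c (consT (x k) s) <-> col k).
  move=> k s Is Ss; split; last by move=> h; exact: h.
  move=> cs t It St; have [_ [_ h]] := FS (S k); exact: (h s t Is It Ss St).1.
have xge : forall k, (k <= x k)%N.
  by elim=> // k IHk; apply: leq_ltn_trans IHk (xinc1 k).
have pick : forall b : Prop, infin (fun k => col k <-> b) -> exists B, (forall y, B y -> A y) /\ infin B /\ homog c B.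
  move=> b Ib; exists (fun y => exists k, y = x k /\ (col k <-> b)); split.
    by move=> y [k [-> _]].
  split.
    move=> n; have [k [nk hk]] := Ib n; exists (x k); split; last by exists k.
    exact: leq_trans nk (xge k).
  have key : forall t, incr t -> (forall y, exists k, t y = x k /\ (col k <-> b)) -> (c t <-> b).
    move=> t It Xt; have [k [tk ck]] := Xt ord0.
    rewrite -(consT_tail t) tk -ck; apply: colP; first exact: tail_incr.
    move=> j; have [k' [tk' _]] := Xt (lift ord0 j).
    rewrite /tailT tk'; apply: xlater; apply: (incr_inj xinc).
    by rewrite -tk' -tk; exact: incr_head It j.
  by move=> s t Is It Xs Xt; rewrite (key s Is Xs) (key t It Xt).
have [h|h] := classic (infin (fun k => col k <-> True)); first exact: pick h.
apply: (pick False) => n; apply: NNPP => hn; apply: h => n'.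
apply: NNPP => hn'; apply: hn; exists (maxn n n'); split; first exact: leq_maxl.
split=> // cm; apply: hn'; exists (maxn n n'); split; first exact: leq_maxr.
by split.
Qed.
Definition cond := {N : nat & ('I_N -> nat) -> Prop}.

Lemma ramsey_list (l : seq cond) : exists B, infin B /\
  forall k, List.In k l -> homog (projT2 k) B.
Proof.
elim: l => [|k l [B [IB HB]]].
  by exists (fun _ => True); split=> // n; exists n.
have [B' [B'B [IB' HB']]] := ramsey (projT2 k) IB.
exists B'; split => // k' [<- //|kl]; apply: homog_sub B'B _; exact: HB.
Qed.

Lemma enum_infin (B : nat -> Prop) : infin B ->
  exists e : nat -> nat, (forall i j, (i < j)%N -> (e i < e j)%N) /\ forall i, B (e i).
Proof.
move=> IB.
have nx : forall y, exists x, (y < x)%N /\ B x by move=> y; exact: IB y.+1.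
pose nxt := fun y => proj1_sig (constructive_indefinite_description _ (nx y)).
have nxP : forall y, (y < nxt y)%N /\ B (nxt y)
  by move=> y; exact: (proj2_sig (constructive_indefinite_description _ (nx y))).
exists (fun k => iter k.+1 nxt 0); split; last by move=> i; exact: (nxP _).2.
by apply: incrS => k; exact: (nxP _).1.
Qed.

Definition strict_ext (A : Type) (U U' V V' : A -> Prop) :
  (forall a, U a <-> U' a) -> (forall a, V a <-> V' a) ->
  strict_subset U V -> strict_subset U' V'.
Proof.
move=> EU EV [sub [w [Vw nUw]]]; split.
  by move=> a /EU /sub /EV.
by exists w; split; [apply/EV|rewrite -EU].
Qed.

Section Gen.
Variables (L : language) (M : structure L).

Lemma scons_map (f : M -> M) n (x : M) (v : 'I_n -> M) :
  (fun i => f (scons x v i)) = scons (f x) (fun i => f (v i)).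
Proof. by apply: functional_extensionality => i; rewrite /scons; case: unlift. Qed.

Lemma env2_map (f : M -> M) n m (a : 'I_n -> M) (b : 'I_m -> M) :
  (fun k => f (env2 a b k)) = env2 (fun i => f (a i)) (fun j => f (b j)).
Proof. by apply: functional_extensionality => k; rewrite /env2; case: split. Qed.

Variable s : automorphism M.

Lemma teval_aut n (v : 'I_n -> M) t : s (teval v t) = teval (fun i => s (v i)) t.
Proof.
elim: t => [i|f ts IH] //=; rewrite aut_fun_hom; congr interp_fun.
by apply: functional_extensionality => i; exact: IH.
Qed.

Lemma sat_aut n (psi : formula L n) : forall v, sat v psi <-> sat (fun i => s (v i)) psi.
Proof.
elim: psi => {n} /=.
- by [].
- by [].
- move=> n t1 t2 v; rewrite -!teval_aut; split; first by move->.
  exact: (can_inj (aut_funK s)).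
- move=> n r ts v; rewrite (aut_rel_hom s).
  have -> : (fun i => teval (fun j => s (v j)) (ts i)) = (fun i => s (teval v (ts i))).
    by apply: functional_extensionality => i; rewrite teval_aut.
  by [].
- by move=> n p IH v; rewrite IH.
- by move=> n p IHp q IHq v; rewrite IHp IHq.
- by move=> n p IHp q IHq v; rewrite IHp IHq.
- by move=> n p IHp q IHq v; rewrite IHp IHq.
- move=> n p IH v; split=> -[x hx].
    by exists (s x); rewrite -(scons_map (aut_fun s)); apply/(IH (scons x v)).
  exists (aut_inv s x); apply/(IH (scons (aut_inv s x) v)); rewrite (scons_map (aut_fun s)) aut_invK; exact: hx.
- move=> n p IH v; split=> hx x.
    by move: (hx (aut_inv s x)); rewrite IH (scons_map (aut_fun s)) aut_invK.
  by apply/(IH (scons x v)); rewrite (scons_map (aut_fun s)); exact: hx.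
Qed.

Lemma defset_aut n m (phi : formula L (n + m)) (b : 'I_m -> M) a :
  defset phi (fun c => s (b c)) a <-> defset phi b (fun i => aut_inv s (a i)).
Proof.
rewrite /defset (sat_aut _ (env2 _ b)) env2_map.
have -> : (fun i => s (aut_inv s (a i))) = a.
  by apply: functional_extensionality => i; rewrite aut_invK.
by [].
Qed.

Lemma image_aut n (U : ('I_n -> M) -> Prop) a :
  aut_image s U a <-> U (fun i => aut_inv s (a i)).
Proof.
split.
  move=> [a' [Ua' E]].
  have -> : (fun i => aut_inv s (a i)) = a'.
    by apply: functional_extensionality => i; rewrite E aut_funK.
  by [].
by move=> h; exists (fun i => aut_inv s (a i)); split=> // i; rewrite aut_invK.
Qed.

Lemma two_one n m (phi : formula L (n + m)) (b : 'I_m -> M) :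
  strict_subset (defset phi b) (aut_image s (defset phi b)) ->
  forall i, strict_subset (defset phi (fun c => iter i s (b c)))
                          (defset phi (fun c => iter i.+1 s (b c))).
Proof.
move=> H.
have tr : forall b1 b2 : 'I_m -> M, strict_subset (defset phi b1) (defset phi b2) ->
    strict_subset (defset phi (fun c => s (b1 c))) (defset phi (fun c => s (b2 c))).
  move=> b1 b2 [sub [w [w2 nw1]]].
  have ew : (fun i => aut_inv s (s (w i))) = w.
    by apply: functional_extensionality => i; rewrite aut_funK.
  split.
    by move=> a /defset_aut /sub h; apply/defset_aut.
  exists (fun i => s (w i)); split.
    by apply/defset_aut; rewrite ew.
  by move/defset_aut; rewrite ew.
elim=> [|i IH].
  apply: strict_ext H => a //; rewrite image_aut -defset_aut //.
exact: tr IH.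
Qed.

Lemma pow_succ k x : aut_pow s (k + 1)%R x = s (aut_pow s k x).
Proof.
case: k => p.
  have -> : (Posz p + 1)%R = Posz p.+1 by lia.
  by [].
case: p => [|q].
  have -> : (Negz 0 + 1)%R = 0%R by rewrite NegzE; lia.
  by rewrite /= aut_invK.
have -> : (Negz q.+1 + 1)%R = Negz q by rewrite !NegzE; lia.
by rewrite /= aut_invK.
Qed.

Lemma pow_pred k x : aut_pow s (k - 1)%R x = aut_inv s (aut_pow s k x).
Proof.
have := pow_succ (k - 1)%R x; rewrite subrK => ->; by rewrite aut_funK.
Qed.

Lemma pow_add k l x : aut_pow s k (aut_pow s l x) = aut_pow s (k + l)%R x.
Proof.
have pos : forall p : nat, aut_pow s p (aut_pow s l x) = aut_pow s (p%:Z + l)%R x.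
  elim=> [|p IH]; first by rewrite add0r.
  have -> : (Posz p.+1 + l)%R = ((Posz p + l) + 1)%R by lia.
  by rewrite pow_succ -IH.
have neg : forall p : nat, aut_pow s (- p%:Z)%R (aut_pow s l x) = aut_pow s (- p%:Z + l)%R x.
  elim=> [|p IH]; first by rewrite oppr0 add0r.
  have -> : (- Posz p.+1 + l)%R = ((- Posz p + l) - 1)%R by lia.
  have -> : (- Posz p.+1)%R = (- Posz p - 1)%R by lia.
  by rewrite !pow_pred IH.
case: k => p; first exact: pos.
rewrite NegzE; exact: neg.
Qed.

Section Shape.
Variables (n : nat) (U : ('I_n -> M) -> Prop).

Lemma xi_down : (forall a, U a -> aut_image s U a) ->
  forall a k k', (k' <= k)%R -> xi s U a k -> xi s U a k'.
Proof.
move=> sub a.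
have d1 : forall k, xi s U a k -> xi s U a (k - 1)%R.
  move=> k /sub /image_aut; rewrite /xi /tact.
  have -> : (fun i => aut_pow s (k - 1)%R (a i)) = (fun i => aut_inv s (aut_pow s k (a i))).
    by apply: functional_extensionality => i; rewrite pow_pred.
  by [].
have dd : forall d : nat, forall k, xi s U a k -> xi s U a (k - d%:Z)%R.
  elim=> [|d IH] k h; first by rewrite subr0.
  have -> : (k - d.+1%:Z)%R = ((k - d%:Z) - 1)%R by lia.
  by apply: d1; apply: IH.
move=> k k' le h; have -> : k' = (k - (absz (k - k'))%:Z)%R by lia.
exact: dd.
Qed.

Lemma strict_shape : strict_subset U (aut_image s U) <-> xi_Theta_shape s U.
Proof.
split.
  move=> [sub [y [Iy nUy]]].
  have down := xi_down sub.
  move/image_aut: Iy => Uy'.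
  set y' := (fun i => aut_inv s (y i)) in Uy'.
  have xi1 : ~ xi s U y' 1%R.
    rewrite /xi /tact /y' /=.
    have -> : (fun i => s (aut_inv s (y i))) = y.
      by apply: functional_extensionality => i; rewrite aut_invK.
    by [].
  have xiy : forall k, xi s U y' k <-> (k <= 0)%R.
    move=> k; split.
      move=> h; apply: NNPP => hk; apply: xi1; apply: (down _ k) => //; lia.
    by move=> hk; apply: (down _ 0%R) => //.
  split.
    move=> I [K HK]; exists (tact (aut_pow s (- K)%R) y') => k.
    rewrite HK /xi /tact.
    have -> : (fun i => aut_pow s k (aut_pow s (- K)%R (y' i))) = (fun i => aut_pow s (k - K)%R (y' i)).
      by apply: functional_extensionality => i; rewrite pow_add.
    change ((k <= K)%R <-> xi s U y' (k - K)%R); rewrite xiy; lia.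
  move=> I [a Ha].
  have [h0|h0] := classic (forall i, ~ I i); first by right; left.
  have [h1|h1] := classic (forall i, I i); first by right; right.
  left.
  have [k0 Ik0] : exists k0, I k0 by apply: NNPP => h; apply: h0 => i Ii; apply: h; exists i.
  have [k1 nIk1] : exists k1, ~ I k1 by apply: NNPP => h; apply: h1 => i; apply: NNPP => Ii; apply: h; exists i.
  have dI : forall k k', (k' <= k)%R -> I k -> I k'.
    by move=> k k' le /Ha hk; apply/Ha; exact: down hk.
  have lt01 : (k0 < k1)%R.
    by rewrite ltNge; apply/negP => le; apply: nIk1; exact: dI Ik0.
  have found : forall d : nat, forall k, I k -> ~ I (k + d%:Z)%R -> exists K, I K /\ ~ I (K + 1)%R.
    elim=> [|d IH] k Ik nIk; first by move: nIk; rewrite addr0.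
    have [Ik1|nIk1'] := classic (I (k + 1)%R); last by exists k.
    apply: (IH _ Ik1); have -> : (k + 1 + d%:Z)%R = (k + d.+1%:Z)%R by lia.
    by [].
  have [K [IK nIK]] : exists K, I K /\ ~ I (K + 1)%R.
    apply: (found (absz (k1 - k0)) k0 Ik0).
    have -> : (k0 + (absz (k1 - k0))%:Z)%R = k1 by lia.
    by [].
  exists K => i; split.
    move=> Ii; rewrite leNgt; apply/negP => Ki; apply: nIK; apply: (dI i) => //; lia.
  by move=> iK; exact: dI IK.
move=> [th sh].
have sub : forall a, U a -> aut_image s U a.
  move=> a Ua; apply/image_aut.
  have := sh (xi s U a) (ex_intro _ a (fun k => iff_refl _)).
  move=> [[K HK]|[h|h]].
  - have : xi s U a 0%R by exact: Ua.
    move/HK => h0; have /HK : (-1 <= K)%R by lia.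
    by [].
  - by have := h 0%R.
  - exact: (h (-1)%R).
split=> //.
have [a Ha] : in_xi_image s U (fun i => (i <= 0)%R).
  by apply: th; exists 0%R.
exists (fun i => s (a i)); split.
  apply/image_aut.
  have -> : (fun i => aut_inv s (s (a i))) = a.
    by apply: functional_extensionality => i; rewrite aut_funK.
  by have /Ha : (0 <= 0 :> int)%R by [].
by move=> h; have /Ha : xi s U a 1%R by exact: h.
Qed.

End Shape.
End Gen.

Lemma sig_eq (A : Type) (P : A -> Prop) (x y : {a | P a}) : proj1_sig x = proj1_sig y -> x = y.
Proof. case: x => a pa; case: y => b pb /= E; subst; f_equal; apply: proof_irrelevance. Qed.

Section UFlemmas.
Variables (I : Type) (U : (I -> Prop) -> Prop) (HU : isUF U).

Lemma uim (A B : I -> Prop) : U A -> (forall u, A u -> B u) -> U B.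
Proof. by move=> h1 h2; exact: (uS HU h2 h1). Qed.

Lemma uEq (C A B : I -> Prop) : U C -> (forall u, C u -> (A u <-> B u)) -> (U A <-> U B).
Proof.
move=> UC h; split=> h'.
  by apply: (uim (uI HU UC h')) => u [cu]; rewrite (h u cu).
by apply: (uim (uI HU UC h')) => u [cu]; rewrite (h u cu).
Qed.

Lemma uEqT (A B : I -> Prop) : (forall u, A u <-> B u) -> (U A <-> U B).
Proof. by move=> h; apply: (uEq (uT HU)) => u _; exact: h. Qed.


Lemma uNot (A : I -> Prop) : U (fun u => ~ A u) <-> ~ U A.
Proof.
split.
  by move=> h1 h2; apply: (u0 HU); apply: (uim (uI HU h1 h2)) => u [].
by move=> h; case: (uC HU A).
Qed.

Lemma uAnd (A B : I -> Prop) : U (fun u => A u /\ B u) <-> U A /\ U B.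
Proof.
split; last by case=> h1 h2; exact: uI.
by move=> h; split; apply: (uim h) => u [].
Qed.

Lemma uOr (A B : I -> Prop) : U (fun u => A u \/ B u) <-> U A \/ U B.
Proof.
split; last by case=> h; apply: (uim h) => u hh; [left|right].
move=> h; apply: NNPP => hn.
have nA : ~ U A by move=> ?; apply: hn; left.
have nB : ~ U B by move=> ?; apply: hn; right.
move/uNot: nA => nA; move/uNot: nB => nB.
by apply: (u0 HU); apply: (uim (uI HU h (uI HU nA nB))) => u [[ha|hb] [na nb]]; [exact: na ha|exact: nb hb].
Qed.

Lemma uImp (A B : I -> Prop) : U (fun u => A u -> B u) <-> (U A -> U B).
Proof.
split; first by move=> h1 h2; apply: (uim (uI HU h1 h2)) => u [f /f].
move=> h; case: (uC HU A) => hA.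
  by apply: (uim (h hA)) => u ? _.
by apply: (uim hA) => u hn /hn.
Qed.

Lemma uConst (P : Prop) : U (fun _ => P) <-> P.
Proof.
split; last by move=> p; apply: (uim (uT HU)) => u _.
by move=> h; apply: NNPP => hn; apply: (u0 HU); apply: (uim h).
Qed.

Lemma uIfin k (A : 'I_k -> I -> Prop) : (forall i, U (A i)) -> U (fun u => forall i, A i u).
Proof.
elim: k A => [|k IH] A h.
  by apply: (uim (uT HU)) => u _ [].
have h1 := IH (fun i => A (lift ord0 i)) (fun i => h _).
apply: (uim (uI HU (h ord0) h1)) => u [h0 hl] i.
by case: (unliftP ord0 i) => [j ->|->].
Qed.

End UFlemmas.

Definition Ix := (seq cond * nat)%type.
Definition ixle (a b : Ix) := (forall k, List.In k a.1 -> List.In k b.1) /\ (a.2 <= b.2)%N.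

Definition cval (k : cond) : ('I_(projT1 k) -> nat) -> Prop := projT2 k.
Arguments cval : clear implicits.

Section Constr.
Variables (L : language) (M : structure L) (n m : nat) (phi : formula L (n + m))
  (bs : nat -> 'I_m -> M)
  (chain : forall i, strict_subset (defset phi (bs i)) (defset phi (bs i.+1))).
Variables (U : (Ix -> Prop) -> Prop) (HU : isUF U) (Ucone : forall a, U (ixle a)).
Variables (e : Ix -> nat -> nat) (einc : forall u i j, (i < j)%N -> (e u i < e u j)%N)
  (ehom : forall (u : Ix) (k : cond), List.In k u.1 -> forall s t : 'I_(projT1 k) -> nat, incr s -> incr t ->
     (cval k (fun x => e u (s x)) <-> cval k (fun x => e u (t x)))).

Definition Ww := int -> 'I_m -> M.
Definition hh (u : Ix) (z : int) := e u (absz (z + (u.2)%:Z)%R).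
Definition W (u : Ix) : Ww := fun z => bs (hh u z).
Definition Truth (P : Ww -> Prop) := U (fun u => P (W u)).

Definition agree (R : nat) (w w' : Ww) := forall z, (absz z <= R)%N -> w z = w' z.
Definition locR (t : Ww -> M) R := forall w w', agree R w w' -> t w = t w'.
Definition locP (P : Ww -> Prop) R := forall w w', agree R w w' -> (P w <-> P w').

Lemma agree_mono R R' w w' : (R <= R')%N -> agree R' w w' -> agree R w w'.
Proof. by move=> le h z hz; apply: h; apply: leq_trans le. Qed.

Lemma locR_mono t R R' : (R <= R')%N -> locR t R -> locR t R'.
Proof. by move=> le h w w' /(agree_mono le); exact: h. Qed.

Definition LF := {t : Ww -> M | exists R, locR t R}.

Lemma fam_local k (f : 'I_k -> LF) : exists R, forall i, locR (proj1_sig (f i)) R.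
Proof.
pose Rf := fun i => proj1_sig (constructive_indefinite_description _ (proj2_sig (f i))).
exists (\max_i Rf i) => i.
apply: (locR_mono (leq_bigmax i)).
exact: (proj2_sig (constructive_indefinite_description _ (proj2_sig (f i)))).
Qed.

Definition equiv (t t' : LF) := Truth (fun w => proj1_sig t w = proj1_sig t' w).

Lemma equiv_refl t : equiv t t.
Proof. by apply: (uim HU (uT HU)). Qed.
Lemma equiv_sym t t' : equiv t t' -> equiv t' t.
Proof. by move=> h; apply: (uim HU h). Qed.
Lemma equiv_trans t1 t2 t3 : equiv t1 t2 -> equiv t2 t3 -> equiv t1 t3.
Proof. by move=> h1 h2; apply: (uim HU (uI HU h1 h2)) => u [-> ->]. Qed.

Definition HC := {C : LF -> Prop | exists t, C = equiv t}.
Definition mk (t : LF) : HC := exist _ (equiv t) (ex_intro _ t erefl).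
Definition rep (x : HC) : LF := proj1_sig (constructive_indefinite_description _ (proj2_sig x)).

Lemma rep_spec x : proj1_sig x = equiv (rep x).
Proof. exact: (proj2_sig (constructive_indefinite_description _ (proj2_sig x))). Qed.

Lemma mk_eq t t' : equiv t t' -> mk t = mk t'.
Proof.
move=> h; apply: sig_eq => /=; apply: functional_extensionality => s.
apply: propositional_extensionality; split=> h'.
  exact: equiv_trans (equiv_sym h) h'.
exact: equiv_trans h h'.
Qed.

Lemma mk_inv t t' : mk t = mk t' -> equiv t t'.
Proof. move=> /(congr1 (@proj1_sig _ _)) /= E; rewrite E; exact: equiv_refl. Qed.

Lemma mk_rep x : mk (rep x) = x.
Proof. apply: sig_eq => /=; by rewrite -rep_spec. Qed.

Lemma rep_mk t : equiv (rep (mk t)) t.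
Proof.
have := rep_spec (mk t) => /= E.
have : equiv t t by exact: equiv_refl.
by rewrite E.
Qed.

Lemma rep_mk_fam k (f : 'I_k -> LF) :
  U (fun u => forall i, proj1_sig (rep (mk (f i))) (W u) = proj1_sig (f i) (W u)).
Proof. by apply: (uIfin HU) => i; exact: rep_mk. Qed.

Lemma eq_HC (x y : HC) : x = y <-> equiv (rep x) (rep y).
Proof.
split; first by move=> ->; exact: equiv_refl.
by move=> h; rewrite -(mk_rep x) -(mk_rep y); exact: mk_eq.
Qed.

Definition LFconst : LF := exist _ (fun _ => inhabitant M) (ex_intro _ 0%N (fun w w' _ => erefl)).

Definition LFapp (f : funs L) (ts : 'I_(fun_ar f) -> LF) : LF.
Proof.
exists (fun w => @interp_fun L M f (fun i => proj1_sig (ts i) w)).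
have [R HR] := fam_local ts; exists R => w w' ag; congr interp_fun.
by apply: functional_extensionality => i; exact: HR.
Defined.

Definition Hs : structure L :=
  @Structure L HC (mk LFconst)
    (fun f args => mk (LFapp (fun i => rep (args i))))
    (fun r args => Truth (fun w => @interp_rel L M r (fun i => proj1_sig (rep (args i)) w))).

Lemma teval_H p (t : term L p) (v : 'I_p -> Hs) :
  U (fun u => proj1_sig (rep (teval v t)) (W u) = teval (fun i => proj1_sig (rep (v i)) (W u)) t).
Proof.
elim: t => [i|f ts IH] /=; first by apply: (uim HU (uT HU)).
apply: (uim HU (uI HU (rep_mk (@LFapp f (fun i => rep (teval v (ts i))))) (uIfin HU IH))) => u [-> h] /=.
by congr interp_fun; apply: functional_extensionality => i; exact: h.
Qed.

Lemma teval_H_fam p k (ts : 'I_k -> term L p) (v : 'I_p -> Hs) :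
  U (fun u => forall i, proj1_sig (rep (teval v (ts i))) (W u) = teval (fun i => proj1_sig (rep (v i)) (W u)) (ts i)).
Proof. by apply: (uIfin HU) => i; exact: teval_H. Qed.

Definition sk p (psi : formula L p.+1) (v : 'I_p -> M) : M :=
  epsilon (inhabits (inhabitant M)) (fun y => sat (scons y v) psi).

Lemma sk_spec p (psi : formula L p.+1) v : (exists y, sat (scons y v) psi) -> sat (scons (sk psi v) v) psi.
Proof. by move=> h; exact: (epsilon_spec (inhabits (inhabitant M)) _ h). Qed.

Definition LFsk p (psi : formula L p.+1) (ts : 'I_p -> LF) : LF.
Proof.
exists (fun w => sk psi (fun i => proj1_sig (ts i) w)).
have [R HR] := fam_local ts; exists R => w w' ag; congr sk.
by apply: functional_extensionality => i; exact: HR.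
Defined.

Lemma scons_rep p (x : Hs) (v : 'I_p -> Hs) w :
  (fun i => proj1_sig (rep (scons x v i)) w) = scons (proj1_sig (rep x) w) (fun i => proj1_sig (rep (v i)) w).
Proof. by apply: functional_extensionality => i; rewrite /scons; case: unlift. Qed.

Lemma truth_lemma p (psi : formula L p) : forall v : 'I_p -> Hs,
  sat v psi <-> Truth (fun w => sat (fun i => proj1_sig (rep (v i)) w) psi).
Proof.
rewrite /Truth; elim: psi => {p} /=.
- by move=> p v; split=> // _; exact: (uT HU).
- by move=> p v; split=> // h; exact: (u0 HU).
- move=> p t1 t2 v; rewrite eq_HC.
  apply: (uEq HU (uI HU (teval_H t1 v) (teval_H t2 v))) => u [-> ->] //.
- move=> p r ts v.
  apply: (uEq HU (teval_H_fam ts v)) => u h.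
  have -> : (fun i => proj1_sig (rep (@teval L Hs p v (ts i))) (W u)) =
            (fun i => teval (fun i => proj1_sig (rep (v i)) (W u)) (ts i)).
    by apply: functional_extensionality => i; exact: h.
  by [].
- by move=> p q IH v; rewrite IH (uNot HU).
- by move=> p q IHq r IHr v; rewrite IHq IHr (uAnd HU).
- by move=> p q IHq r IHr v; rewrite IHq IHr (uOr HU).
- by move=> p q IHq r IHr v; rewrite IHq IHr (uImp HU).
- move=> p q IH v; split.
    move=> [x /IH hx]; apply: (uim HU hx) => u; rewrite scons_rep => h.
    by exists (proj1_sig (rep x) (W u)).
  move=> h; exists (mk (LFsk q (fun i => rep (v i)))); apply/IH.
  apply: (uim HU (uI HU h (rep_mk (LFsk q (fun i => rep (v i)))))) => u [hu E]; rewrite scons_rep E /=.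
  exact: sk_spec.
- move=> p q IH v; split.
    move=> h; apply: NNPP => hn; move/(uNot HU): hn => hn.
    have := h (mk (LFsk (Fneg q) (fun i => rep (v i)))); rewrite IH => h2.
    apply: (u0 HU); apply: (uim HU (uI HU hn (uI HU h2 (rep_mk (LFsk (Fneg q) (fun i => rep (v i))))))) => u [nall [hq E]].
    apply: nall => y; apply: NNPP => ny.
    move: hq; rewrite scons_rep E /=.
    by apply: (@sk_spec p (Fneg q)); exists y.
  move=> h x; apply/IH; apply: (uim HU h) => u hu; rewrite scons_rep; exact: hu.
Qed.


Lemma H_model (T : theory L) : is_model T M -> is_model T Hs.
Proof.
move=> hM s Ts; rewrite /satS truth_lemma /Truth.
have E : forall w, (fun i => proj1_sig (rep (@no_vars L Hs i)) w) = @no_vars L M.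
  by move=> w; apply: functional_extensionality => -[].
have : U (fun _ => satS M s) by apply/(uConst HU); exact: hM.
by move=> h; apply: (uim HU h) => u; rewrite E.
Qed.

Definition incrZ N (i : 'I_N -> int) := forall x y : 'I_N, (x < y)%N -> (i x < i y)%R.

Lemma KL N (Q : ('I_N -> 'I_m -> M) -> Prop) (i j : 'I_N -> int) : incrZ i -> incrZ j ->
  (Truth (fun w => Q (fun k => w (i k))) <-> Truth (fun w => Q (fun k => w (j k)))).
Proof.
move=> Ii Ij.
pose kap : cond := existT _ N (fun s : 'I_N -> nat => Q (fun k => bs (s k))).
pose B := (\max_k (absz (i k) + absz (j k)))%N.
have hB : forall k, (absz (i k) + absz (j k) <= B)%N by move=> k; exact: leq_bigmax.
apply: (uEq HU (Ucone ([:: kap], B))) => -[l r] [hl hr] /=.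
have kl : List.In kap l by apply: hl; left.
simpl in hr.
have si : incr (fun k => absz (i k + r%:Z)%R).
  move=> x y xy; have := Ii x y xy; have := hB x; have := hB y; lia.
have sj : incr (fun k => absz (j k + r%:Z)%R).
  move=> x y xy; have := Ij x y xy; have := hB x; have := hB y; lia.
by have := @ehom (l, r) kap kl _ _ si sj.
Qed.

Definition shiftW (w : Ww) : Ww := fun z => w (z + 1)%R.
Definition shiftW' (w : Ww) : Ww := fun z => w (z - 1)%R.

Lemma SI P R : locP P R -> (Truth P <-> Truth (fun w => P (shiftW w))).
Proof.
move=> hP.
pose N := (R.*2).+1.
pose i := fun k : 'I_N => ((k : nat)%:Z - R%:Z)%R.
pose j := fun k : 'I_N => ((k : nat)%:Z - R%:Z + 1)%R.
pose ext := (fun v : 'I_N -> 'I_m -> M => (fun z : int => v (inord (absz (z + R%:Z)%R)))) : ('I_N -> 'I_m -> M) -> Ww.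
pose Q := fun v => P (ext v).
have Ii : incrZ i by move=> x y xy; rewrite /i; lia.
have Ij : incrZ j by move=> x y xy; rewrite /j; lia.
have inK : forall z, (absz z <= R)%N -> ((inord (absz (z + R%:Z)%R) : 'I_N) : nat) = absz (z + R%:Z)%R.
  move=> z hz; rewrite inordK //; rewrite -addnn; lia.
have E1 : forall w, P w <-> Q (fun k => w (i k)).
  move=> w; apply: hP => z hz; rewrite /ext /i inK //; congr w; lia.
have E2 : forall w, P (shiftW w) <-> Q (fun k => w (j k)).
  move=> w; apply: hP => z hz; rewrite /ext /j /shiftW inK //; congr w; lia.
have K := KL Q Ii Ij; rewrite /Truth in K *.
split => h.
  apply/(uEqT HU (fun u => E2 (W u))); apply/K; apply/(uEqT HU (fun u => E1 (W u))); exact: h.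
apply/(uEqT HU (fun u => E1 (W u))); apply/K; apply/(uEqT HU (fun u => E2 (W u))); exact: h.
Qed.

Lemma SI' P R : locP P R -> (Truth P <-> Truth (fun w => P (shiftW' w))).
Proof.
move=> hP.
have loc' : locP (fun w => P (shiftW' w)) R.+1.
  move=> w w' ag; apply: hP => z hz; apply: ag; lia.
rewrite (SI loc').
have E : forall w, shiftW' (shiftW w) = w.
  by move=> w; apply: functional_extensionality => z; rewrite /shiftW' /shiftW subrK.
rewrite /Truth; split=> h; apply: (uim HU h) => u; by rewrite E.
Qed.

Definition LFshift (t : LF) : LF.
Proof.
exists (fun w => proj1_sig t (shiftW w)).
have [R HR] := proj2_sig t; exists R.+1 => w w' ag; apply: HR => z hz.
apply: ag; lia.
Defined.

Definition LFshift' (t : LF) : LF.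
Proof.
exists (fun w => proj1_sig t (shiftW' w)).
have [R HR] := proj2_sig t; exists R.+1 => w w' ag; apply: HR => z hz.
apply: ag; lia.
Defined.

Lemma loc_eq (t t' : LF) : exists R, locP (fun w => proj1_sig t w = proj1_sig t' w) R.
Proof.
have [R HR] := proj2_sig t; have [R' HR'] := proj2_sig t'.
exists (maxn R R') => w w' ag.
rewrite (HR w w') ?(HR' w w') //; apply: agree_mono ag; [exact: leq_maxr|exact: leq_maxl].
Qed.

Lemma equiv_shift t t' : equiv t t' -> equiv (LFshift t) (LFshift t').
Proof. by have [R HR] := loc_eq t t'; move=> h; apply/(SI HR). Qed.

Lemma equiv_shift' t t' : equiv t t' -> equiv (LFshift' t) (LFshift' t').
Proof. by have [R HR] := loc_eq t t'; move=> h; apply/(SI' HR). Qed.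

Definition sigma_fun (x : Hs) : Hs := mk (LFshift (rep x)).
Definition sigma_inv (x : Hs) : Hs := mk (LFshift' (rep x)).

Lemma mk_shift t : sigma_fun (mk t) = mk (LFshift t).
Proof. by apply: mk_eq; apply: equiv_shift; exact: rep_mk. Qed.
Lemma mk_shift' t : sigma_inv (mk t) = mk (LFshift' t).
Proof. by apply: mk_eq; apply: equiv_shift'; exact: rep_mk. Qed.

Lemma sigma_funK : cancel sigma_fun sigma_inv.
Proof.
move=> x; rewrite /sigma_fun mk_shift' -{2}(mk_rep x); congr mk; apply: sig_eq => /=.
apply: functional_extensionality => w; congr (proj1_sig (rep x)).
by apply: functional_extensionality => z; rewrite /shiftW /shiftW' addrK.
Qed.

Lemma sigma_invK : cancel sigma_inv sigma_fun.
Proof.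
move=> x; rewrite /sigma_inv mk_shift -{2}(mk_rep x); congr mk; apply: sig_eq => /=.
apply: functional_extensionality => w; congr (proj1_sig (rep x)).
by apply: functional_extensionality => z; rewrite /shiftW /shiftW' subrK.
Qed.

Lemma sigma_fun_hom (f : funs L) (args : 'I_(fun_ar f) -> Hs) :
  sigma_fun (@interp_fun L Hs f args) = @interp_fun L Hs f (fun i => sigma_fun (args i)).
Proof.
rewrite /= mk_shift; apply: mk_eq.
apply: (uim HU (rep_mk_fam (fun i => LFshift (rep (args i))))) => u h /=.
by congr interp_fun; apply: functional_extensionality => i; rewrite h.
Qed.

Lemma sigma_rel_hom (r : rels L) (args : 'I_(rel_ar r) -> Hs) :
  @interp_rel L Hs r args <-> @interp_rel L Hs r (fun i => sigma_fun (args i)).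
Proof.
rewrite /=.
have [R HR] := fam_local (fun i => rep (args i)).
have loc : locP (fun w => @interp_rel L M r (fun i => proj1_sig (rep (args i)) w)) R.
  move=> w w' ag.
  have -> : (fun i => proj1_sig (rep (args i)) w) = (fun i => proj1_sig (rep (args i)) w') by
    apply: functional_extensionality => i; exact: HR.
  by [].
rewrite (SI loc) /Truth.
apply: (uEq HU (rep_mk_fam (fun i => LFshift (rep (args i))))) => u h.
have -> : (fun i => proj1_sig (rep (sigma_fun (args i))) (W u)) = (fun i => proj1_sig (rep (args i)) (shiftW (W u))).
  by apply: functional_extensionality => i; rewrite /sigma_fun h.
by [].
Qed.

Definition sigma : automorphism Hs :=
  @Automorphism L Hs sigma_fun sigma_inv sigma_funK sigma_invK sigma_fun_hom sigma_rel_hom.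

Definition VAR (z : int) (c : 'I_m) : LF.
Proof.
exists (fun w => w z c); exists (absz z) => w w' ag; by rewrite ag.
Defined.

Definition bH : 'I_m -> Hs := fun c => mk (VAR 0 c).

Lemma sig_VAR z c : sigma_fun (mk (VAR z c)) = mk (VAR (z + 1)%R c).
Proof. by rewrite /= mk_shift; congr mk; apply: sig_eq. Qed.

Lemma sigi_VAR z c : sigma_inv (mk (VAR z c)) = mk (VAR (z - 1)%R c).
Proof. by rewrite /= mk_shift'; congr mk; apply: sig_eq. Qed.

Lemma pow_VAR k c : aut_pow sigma k (bH c) = mk (VAR k c).
Proof.
case: k => p.
  elim: p => [|p IH] //=.
  rewrite /= in IH; rewrite IH sig_VAR.
  by have -> : (Posz p + 1)%R = Posz p.+1 by lia.
elim: p => [|p IH].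
  by rewrite /= sigi_VAR; have -> : (0 - 1)%R = Negz 0 by rewrite NegzE; lia.
rewrite /= in IH *; rewrite IH sigi_VAR.
by have -> : (Negz p - 1)%R = Negz p.+1 by rewrite !NegzE; lia.
Qed.

Lemma H_inW : in_W bH sigma.
Proof.
move=> N p psi g i j Ii Ij.
have E : forall i' : 'I_N -> int, (fun x => aut_pow sigma (i' (g x).1) (bH (g x).2)) = (fun x => mk (VAR (i' (g x).1) (g x).2)).
  by move=> i'; apply: functional_extensionality => x; rewrite pow_VAR.
rewrite !E !truth_lemma.
have F : forall i' : 'I_N -> int, Truth (fun w => sat (fun x => proj1_sig (rep (mk (VAR (i' (g x).1) (g x).2))) w) psi)
   <-> Truth (fun w => sat (fun x => w (i' (g x).1) (g x).2) psi).
  move=> i'; apply: (uEq HU (rep_mk_fam (fun x => VAR (i' (g x).1) (g x).2))) => u h.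
  have -> : (fun x => proj1_sig (rep (mk (VAR (i' (g x).1) (g x).2))) (W u)) = (fun x => W u (i' (g x).1) (g x).2).
    by apply: functional_extensionality => x; rewrite h.
  by [].
rewrite !F.
exact: (KL (fun v => sat (fun x => v (g x).1 (g x).2) psi) Ii Ij).
Qed.

Lemma DH z (a : 'I_n -> Hs) :
  @defset L Hs n m phi (fun c => mk (VAR z c)) a <->
  U (fun u => defset phi (bs (hh u z)) (fun i => proj1_sig (rep (a i)) (W u))).
Proof.
rewrite /defset truth_lemma /Truth.
apply: (uEq HU (rep_mk_fam (fun c => VAR z c))) => u h.
have -> : (fun k => proj1_sig (rep (env2 a (fun c => mk (VAR z c)) k)) (W u)) =
          env2 (fun i => proj1_sig (rep (a i)) (W u)) (bs (hh u z)).
  apply: functional_extensionality => k; rewrite /env2; case: split => // c /=; exact: h.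
by [].
Qed.

Lemma hh01 u : (hh u 0 < hh u 1)%N.
Proof. apply: einc; lia. Qed.

Lemma chain_le i j : (i <= j)%N -> forall a, defset phi (bs i) a -> defset phi (bs j) a.
Proof.
elim: j => [|j IH]; first by rewrite leqn0 => /eqP ->.
rewrite leq_eqVlt => /orP [/eqP -> //|]; rewrite ltnS => ij a h.
by apply: (chain j).1; apply: IH.
Qed.

Lemma chain_wit i j : (i < j)%N -> exists a, defset phi (bs j) a /\ ~ defset phi (bs i) a.
Proof.
move=> ij; have [_ [a [h1 h2]]] := chain i; exists a; split => //.
exact: chain_le ij _ h1.
Qed.

Definition Tw (y0 y1 : 'I_m -> M) : 'I_n -> M :=
  epsilon (inhabits (fun _ => inhabitant M)) (fun a => defset phi y1 a /\ ~ defset phi y0 a).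

Definition WIT (i : 'I_n) : LF.
Proof.
exists (fun w => Tw (w 0%R) (w 1%R) i); exists 1%N => w w' ag.
by rewrite (ag 0%R) ?(ag 1%R).
Defined.

Lemma strictH : strict_subset (@defset L Hs n m phi bH) (@defset L Hs n m phi (fun c => mk (VAR 1 c))).
Proof.
split.
  move=> a /DH h; apply/DH; apply: (uim HU h) => u; apply: chain_le; exact: ltnW (hh01 u).
exists (fun i => mk (WIT i)).
have key : U (fun u => (fun i => proj1_sig (rep (mk (WIT i))) (W u)) = Tw (bs (hh u 0)) (bs (hh u 1))).
  apply: (uim HU (rep_mk_fam WIT)) => u h; apply: functional_extensionality => i; by rewrite h.
have spec : forall u, defset phi (bs (hh u 1)) (Tw (bs (hh u 0)) (bs (hh u 1))) /\
                      ~ defset phi (bs (hh u 0)) (Tw (bs (hh u 0)) (bs (hh u 1))).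
  move=> u; apply: (epsilon_spec (inhabits (fun _ => inhabitant M)) (fun a => defset phi (bs (hh u 1)) a /\ ~ defset phi (bs (hh u 0)) a)).
  exact: chain_wit (hh01 u).
split.
  by apply/DH; apply: (uim HU key) => u ->; exact: (spec u).1.
move/DH => h; apply: (u0 HU); apply: (uim HU (uI HU h key)) => u [hd E]; move: hd; rewrite E.
exact: (spec u).2.
Qed.

Lemma main_constr (T : theory L) : is_model T M ->
  exists (M' : structure L) (b : 'I_m -> M') (s : automorphism M'),
    is_model T M' /\ strict_subset (defset phi b) (aut_image s (defset phi b)) /\ in_W b s.
Proof.
move=> hM; exists Hs, bH, sigma; split; first exact: H_model.
split; last exact: H_inW.
apply: strict_ext strictH => a //.
rewrite image_aut -defset_aut.
have -> : (fun c => aut_fun sigma (bH c)) = (fun c => mk (VAR 1 c)).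
  by apply: functional_extensionality => c; rewrite /bH /= sig_VAR add0r.
by [].
Qed.

End Constr.

Lemma sop_constr (L : language) (T : theory L) n m (phi : formula L (n + m)) :
  SOP T phi ->
  exists (M' : structure L) (b : 'I_m -> M') (s : automorphism M'),
    is_model T M' /\ strict_subset (defset phi b) (aut_image s (defset phi b)) /\ in_W b s.
Proof.
move=> [M [bs [hM chain]]].
have [U [HU Ucone]] : exists U, isUF U /\ forall a, U (ixle a).
  apply: (@ultra_exists Ix ixle ([::], 0%N)).
  - by move=> a; split.
  - move=> a b c [h1 h2] [h3 h4]; split; first by move=> k /h1 /h3.
    exact: leq_trans h4.
  - move=> a b; exists (a.1 ++ b.1, maxn a.2 b.2); split; split => /=.
    + by move=> k ka; apply: List.in_or_app; left.
    + exact: leq_maxl.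
    + by move=> k kb; apply: List.in_or_app; right.
    + exact: leq_maxr.
have exE : forall u : Ix, exists e : nat -> nat, (forall i j, (i < j)%N -> (e i < e j)%N) /\
    forall k : cond, List.In k u.1 -> forall s t : 'I_(projT1 k) -> nat, incr s -> incr t ->
     (cval k (fun x => e (s x)) <-> cval k (fun x => e (t x))).
  move=> u; have [B [IB HB]] := ramsey_list u.1.
  have [e [einc eB]] := enum_infin IB.
  exists e; split => // k kl s t Is It.
  apply: (HB k kl) => //.
  - by move=> x y xy; apply: einc; apply: Is.
  - by move=> x y xy; apply: einc; apply: It.
pose e := fun u => proj1_sig (constructive_indefinite_description _ (exE u)).
have eP : forall u, _ := fun u => proj2_sig (constructive_indefinite_description _ (exE u)).
apply: (@main_constr L M n m phi bs chain U HU Ucone e).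
- by move=> u; exact: (eP u).1.
- by move=> u; exact: (eP u).2.
exact: hM.
Qed.

Theorem proposition4p11 (L : language) (T : theory L) (hT : complete_theory T)
  (n m : nat) (phi : formula L (n + m)) :
  [<-> SOP T phi;
       exists (M : structure L) (b : 'I_m -> M) (s : automorphism M),
         is_model T M /\
         strict_subset (defset phi b) (aut_image s (defset phi b));
       exists (M : structure L) (b : 'I_m -> M) (s : automorphism M),
         is_model T M /\ xi_Theta_shape s (defset phi b);
       exists (M : structure L) (b : 'I_m -> M) (s : automorphism M),
         is_model T M /\ xi_Theta_shape s (defset phi b) /\ in_W b s].
Proof.
have two_sop : forall (M : structure L) (b : 'I_m -> M) (s : automorphism M),
    is_model T M -> strict_subset (defset phi b) (aut_image s (defset phi b)) -> SOP T phi.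
  move=> M b s hM h; exists M, (fun i c => iter i s (b c)); split => //.
  exact: two_one h.
tfae.
- by move=> /sop_constr [M [b [s [h1 [h2 _]]]]]; exists M, b, s.
- by move=> [M [b [s [h1 h2]]]]; exists M, b, s; split => //; apply/strict_shape.
- move=> [M [b [s [h1 /strict_shape h2]]]].
  have [M' [b' [s' [h1' [h2' h3']]]]] := sop_constr (two_sop M b s h1 h2).
  by exists M', b', s'; split => //; split => //; apply/strict_shape.
- move=> [M [b [s [h1 [/strict_shape h2 _]]]]]; exact: two_sop h1 h2.
Qed.
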